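(* Let $n\ge3$ and $x^\Lambda\partial_k\in\mathcal{B}$. If $\mathrm{lev}_i(x^\Lambda\partial_k)\le i$ for some integer $i\ge-1$, then $\mathrm{lev}_{i+(n-1)}(x^\Lambda\partial_k)\le i+(n-1)$. In particular, for every integer $h$: $\mathrm{lev}_i(x^\Lambda\partial_k)>i$ for all integers $i$ with $-1\le i\le h(n-1)$ if and only if $\mathrm{lev}_i(x^\Lambda\partial_k)>i$ for all integers $i\ge -1$ with $(h-1)(n-1)+1\le i\le h(n-1)$.
   Context: Fix an integer $n\ge 3$. A partition is a sequence $\Lambda=(\lambda_j)_{j\ge1}$ of non-negative integers with finite support; $\mathrm{wt}(\Lambda)=\sum_j j\lambda_j$; $\mathrm{Part}(k)$ is the set of partitions with $\lambda_j=0$ for $j>k$. Write $x^\Lambda=\prod_j x_j^{\lambda_j}$, $\deg(x^\Lambda)=\sum_j\lambda_j$. $\mathcal{B}=\{x^\Lambda\partial_k : 1\le k\le n,\ \Lambda\in\mathrm{Part}(k-1)\}$. For an integer $i\ge-1$, let $r_i\in\{1,\dots,n-1\}$ with $i\equiv r_i\pmod{n-1}$ and $h_i=\lfloor (i-1)/(n-1)\rfloor+1$. Define $\mathrm{WD}(x^\Lambda\partial_k)=\mathrm{wt}(\Lambda)-\deg(x^\Lambda)+n-k$ and $\mathrm{lev}_i(x^\Lambda\partial_k)=h_i\,\mathrm{WD}(x^\Lambda\partial_k)+\deg(x^\Lambda)-1$ (defined for integers $i\ge-1$). *)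

(* Defs.v *)
From mathcomp Require Import all_boot all_order all_algebra.
Set Implicit Arguments. Unset Strict Implicit. Unset Printing Implicit Defensive.
Import Order.TTheory GRing.Theory Num.Theory.

(* A partition Lambda = (lambda_j)_{j>=1} is represented by a finite sequence
   s : seq nat with lambda_j = nth 0 s (j-1); entries beyond size s are 0,
   so the support is automatically finite. *)
Definition lam (s : seq nat) (j : nat) : nat := nth 0%N s j.-1.

Definition inPart (k : nat) (s : seq nat) : Prop :=
  forall j : nat, (k < j)%N -> lam s j = 0%N.

Definition wt (s : seq nat) : nat := \sum_(i < size s) (i.+1 * nth 0%N s i)%N.

Definition deg (s : seq nat) : nat := sumn s.

Definition inB (n : nat) (s : seq nat) (k : nat) : Prop :=
  [/\ (1 <= k)%N, (k <= n)%N & inPart k.-1 s].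

Local Open Scope ring_scope.

Definition WD (n : nat) (s : seq nat) (k : nat) : int :=
  (wt s)%:Z - (deg s)%:Z + n%:Z - k%:Z.

Definition hh (n : nat) (i : int) : int := ((i - 1) %/ (n%:Z - 1))%Z + 1.

Definition lev (n : nat) (i : int) (s : seq nat) (k : nat) : int :=
  hh n i * WD n s k + (deg s)%:Z - 1.

(* Main.v *)
Require Import Defs.
From mathcomp Require Import all_boot all_order all_algebra.
From mathcomp Require Import zify ring lra.
Import Order.TTheory GRing.Theory Num.Theory.
Local Open Scope ring_scope.

Lemma wt_le (s : seq nat) (k : nat) : inPart k.-1 s -> (wt s <= k.-1 * deg s)%N.
Proof.
move=> Hp; rewrite /wt /deg sumnE (big_nth 0%N) big_mkord big_distrr /=.
apply: leq_sum => i _.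
case: (ltnP k.-1 i.+1) => H.
  by have := Hp i.+1 H; rewrite /lam /= => ->; rewrite muln0.
by rewrite leq_mul2r H orbT.
Qed.

Lemma hh_spec (n : nat) (i : int) : (3 <= n)%N ->
  exists q r : int, [/\ hh n i = q + 1, i - 1 = q * (n%:Z - 1) + r, 0 <= r
     & r < n%:Z - 1].
Proof.
move=> Hn; exists ((i - 1) %/ (n%:Z - 1))%Z, ((i - 1) %% (n%:Z - 1))%Z.
have Hm : (0 < n%:Z - 1) by lia.
split => //; first exact: divz_eq.
  by apply: modz_ge0; lia.
exact: ltz_pmod.
Qed.

Lemma hh_shift (n : nat) (i : int) : (3 <= n)%N ->
  hh n (i + (n%:Z - 1)) = hh n i + 1.
Proof.
move=> Hn; rewrite /hh.
have -> : i + (n%:Z - 1) - 1 = 1 * (n%:Z - 1) + (i - 1) by ring.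
rewrite divzMDl; last by lia.
ring.
Qed.

Lemma part1 (n : nat) (s : seq nat) (k : nat) :
  (3 <= n)%N -> inB n s k -> forall i : int, -1 <= i -> lev n i s k <= i ->
      lev n (i + (n%:Z - 1)) s k <= i + (n%:Z - 1).
Proof.
move=> Hn [Hk1 Hkn Hp] i Hi Hl.
have Hw := @wt_le s k Hp.
have -> : lev n (i + (n%:Z - 1)) s k = lev n i s k + WD n s k.
  by rewrite /lev hh_shift //; ring.
move: Hl; rewrite /lev /WD.
have [q [r [-> Hqr Hr0 Hr1]]] := @hh_spec n i Hn.
set W := wt s in Hw *; set D := deg s in Hw *.
rewrite -subn1 in Hw.
have HW : (W%:Z <= (k%:Z - 1) * D%:Z) by nia.
case: (leP 0 q) => Hq.
- case: (D =P 0%N) => HD.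
  + rewrite HD in HW *; nia.
  + nia.
- have Hq1 : q = -1 by nia.
  subst q. rewrite addNr mul0r add0r. move=> Hl.
  have HD : (D <= 1)%N by lia.
  have : (D = 0 \/ D = 1)%N by lia.
  by case=> HD0; rewrite HD0 in HW Hl *; nia.
Qed.

Theorem lemma2p6 (n : nat) (s : seq nat) (k : nat) :
  (3 <= n)%N -> inB n s k ->
  (forall i : int, -1 <= i -> lev n i s k <= i ->
      lev n (i + (n%:Z - 1)) s k <= i + (n%:Z - 1))
  /\
  (forall h : int,
     (forall i : int, -1 <= i -> i <= h * (n%:Z - 1) -> lev n i s k > i)
     <->
     (forall i : int, -1 <= i -> (h - 1) * (n%:Z - 1) + 1 <= i ->
         i <= h * (n%:Z - 1) -> lev n i s k > i)).
Proof.
move=> Hn HB; have P1 := @part1 n s k Hn HB; split => // h; split.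
  by move=> H i Hi _ Hi2; exact: H.
move=> H.
suff: forall d : nat, forall i : int, -1 <= i -> i = h * (n%:Z - 1) - d%:Z ->
    lev n i s k > i.
  move=> Hd i Hi Hih.
  have := Hd (absz (h * (n%:Z - 1) - i)%R) i Hi; apply; lia.
elim/ltn_ind => d IH i Hi Hid.
case: (ltnP d (n.-1)) => Hdn.
  apply: H => //; lia.
rewrite ltNge; apply/negP => Hl.
have := P1 i Hi Hl.
apply/negP; rewrite -ltNge.
apply: (IH (d - n.-1)%N); lia.
Qed.
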